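(* Let $U$ be a solution curve of the normalized two-dimensional capillarity equation, i.e. a $C^2$ function $U(\xi)$ on an open interval with inclination angle $\psi=\arctan U_\xi\in(-\pi/2,\pi/2)$, satisfying $(\sin\psi)_\xi=U$, $U_\xi=\tan\psi$, and let $c$ be the constant with $\tfrac12U^2+\cos\psi\equiv c$ along the curve. Suppose $c>1$ and set $\delta=c-1$. Then: (i) the length $l$ of any $\xi$-interval over which the solution curve (as a graph with $-\pi/2<\psi<\pi/2$) can extend satisfies $l<\sqrt{2/\delta}$; (ii) any such solution curve that is positive at some point can be extended (as a graph, with $-\pi/2<\psi<\pi/2$) across a unique point at which it attains a positive minimum value $U_0$; (iii) if each such positive solution curve (with $c>1$), maximally extended as a graph over the parameter interval $-\pi/2<\psi<\pi/2$, is translated horizontally so that its minimum point lies at $\xi=0$, then the set of all these normalized curves simply covers a domain $\mathcal{D}^+$ (the union of their graphs), i.e. each point of $\mathcal{D}^+$ lies on exactly one of the normalized curves.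
   Context: The capillarity equation in one variable, in non-dimensional coordinates $\xi=\sqrt{\kappa}x$, $U=\sqrt{\kappa}u$ ($\kappa>0$ the capillarity constant), reads $(\sin\psi)_\xi=U$, $U_\xi=\tan\psi$, where $\psi$ is the inclination angle of the graph $U(\xi)$. Every solution satisfies the first integral $\tfrac12U^2+\cos\psi=c$ for a constant $c$. ''Solution curve'' here means a graph $U(\xi)$ solving this system with $-\pi/2<\psi<\pi/2$. *)

(* Defs.v *)
From Stdlib Require Import Reals.
From Coquelicot Require Import Coquelicot.
Open Scope R_scope.

(* inclination angle psi = arctan U_xi, automatically in (-pi/2, pi/2);
   hence U_xi = tan psi holds by definition. *)
Definition psi (U : R -> R) (x : R) : R := atan (Derive U x).

Definition sol (a b : R) (U : R -> R) : Prop :=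
  a < b /\
  forall x, a < x < b ->
    ex_derive U x /\ ex_derive (Derive U) x /\
    continuous (Derive (Derive U)) x /\
    is_derive (fun y => sin (psi U y)) x (U x).

Definition first_int (c a b : R) (U : R -> R) : Prop :=
  forall x, a < x < b -> U x ^ 2 / 2 + cos (psi U x) = c.

Definition extends (a' b' : R) (V : R -> R) (a b : R) (U : R -> R) : Prop :=
  a' <= a /\ b <= b' /\ forall x, a < x < b -> V x = U x.

Definition maximal_sol (a b : R) (U : R -> R) : Prop :=
  sol a b U /\
  forall a' b' V, sol a' b' V -> extends a' b' V a b U -> a' = a /\ b' = b.

Definition normalized_curve (a b : R) (U : R -> R) : Prop :=
  maximal_sol a b U /\
  (exists c, c > 1 /\ first_int c a b U) /\
  (forall x, a < x < b -> 0 < U x) /\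
  a < 0 < b /\
  (forall x, a < x < b -> U 0 <= U x).

(* Main.v *)
Require Import Defs.
From Stdlib Require Import Reals Lra ClassicalEpsilon FunctionalExtensionality Ranalysis5.
From Coquelicot Require Import Coquelicot.
Open Scope R_scope.

Lemma is_derive_cont (f : R -> R) x l : is_derive f x l -> continuity_pt f x.
Proof.
  intro H. apply continuity_pt_filterlim. apply (ex_derive_continuous (K:=R_AbsRing) (V:=R_NormedModule)). exists l; exact H.
Qed.

Lemma mvt_le (f df : R -> R) x y : x <= y ->
  (forall z, x <= z <= y -> is_derive f z (df z)) ->
  (forall z, x <= z <= y -> 0 <= df z) -> f x <= f y.
Proof.
  intros Hxy Hd Hp. destruct (Req_dec x y) as [->|Hne]; [lra|].
  destruct (MVT_gen f x y df) as [z [Hz E]].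
  - intros z Hz. rewrite Rmin_left in Hz by lra. rewrite Rmax_right in Hz by lra.
    apply Hd; lra.
  - intros z Hz. rewrite Rmin_left in Hz by lra. rewrite Rmax_right in Hz by lra.
    apply (is_derive_cont _ _ (df z)), Hd; lra.
  - rewrite Rmin_left in Hz by lra. rewrite Rmax_right in Hz by lra.
    assert (0 <= df z) by (apply Hp; lra). nra.
Qed.

Lemma mvt_lt (f df : R -> R) x y : x < y ->
  (forall z, x <= z <= y -> is_derive f z (df z)) ->
  (forall z, x <= z <= y -> 0 <= df z) ->
  (forall z, x < z < y -> 0 < df z) -> f x < f y.
Proof.
  intros Hxy Hd Hp Hs.
  set (m1 := x + (y - x) / 3). set (m2 := x + 2 * (y - x) / 3).
  assert (f x <= f m1) by (apply (mvt_le f df); intros; [unfold m1; lra| apply Hd | apply Hp]; unfold m1 in *; lra).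
  assert (f m2 <= f y) by (apply (mvt_le f df); intros; [unfold m2; lra| apply Hd | apply Hp]; unfold m2 in *; lra).
  assert (f m1 < f m2).
  { destruct (MVT_gen f m1 m2 df) as [z [Hz E]].
    - intros z Hz. rewrite Rmin_left in Hz by (unfold m1, m2; lra). rewrite Rmax_right in Hz by (unfold m1,m2;lra).
      apply Hd; unfold m1, m2 in *; lra.
    - intros z Hz. rewrite Rmin_left in Hz by (unfold m1, m2; lra). rewrite Rmax_right in Hz by (unfold m1,m2;lra).
      apply (is_derive_cont _ _ (df z)), Hd; unfold m1, m2 in *; lra.
    - rewrite Rmin_left in Hz by (unfold m1, m2; lra). rewrite Rmax_right in Hz by (unfold m1,m2;lra).
      assert (0 < df z) by (apply Hs; unfold m1, m2 in *; lra).
      assert (0 < m2 - m1) by (unfold m1, m2; lra). nra. }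
  lra.
Qed.

Lemma deriv0_const (f : R -> R) a b x y :
  (forall z, a < z < b -> is_derive f z 0) -> a < x < b -> a < y < b -> f x = f y.
Proof.
  intros Hd Hx Hy.
  destruct (MVT_gen f x y (fun _ => 0)) as [z [Hz E]].
  - intros z Hz. apply Hd. split.
    + apply Rle_lt_trans with (Rmin x y); [apply Rmin_glb; lra | lra].
    + apply Rlt_le_trans with (Rmax x y); [lra | apply Rmax_lub; lra].
  - intros z Hz. apply (is_derive_cont _ _ 0), Hd. split.
    + apply Rlt_le_trans with (Rmin x y); [apply Rmin_glb_lt; lra | lra].
    + apply Rle_lt_trans with (Rmax x y); [lra | apply Rmax_lub_lt; lra].
  - lra.
Qed.

Lemma loc_interval p q x : p < x < q -> locally x (fun y => p < y < q).
Proof.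
  intros Hx. assert (He : 0 < Rmin (x - p) (q - x)) by (apply Rmin_pos; lra).
  exists (mkposreal _ He). intros y Hy. unfold ball in Hy; simpl in Hy.
  unfold AbsRing_ball, abs, minus, plus, opp in Hy; simpl in Hy.
  assert (H1 := Rmin_l (x - p) (q - x)). assert (H2 := Rmin_r (x - p) (q - x)).
  apply Rabs_def2 in Hy. lra.
Qed.

Definition gc (c t : R) : R := cos t / sqrt (2 * (c - cos t)).
Definition Gc (c t : R) : R := RInt (gc c) 0 t.

Lemma sq_pos c t : 1 < c -> 0 < sqrt (2 * (c - cos t)).
Proof. intros. apply sqrt_lt_R0. pose proof (COS_bound t). lra. Qed.

Lemma gc_cont c t : 1 < c -> continuous (gc c) t.
Proof.
  intros Hc. apply (ex_derive_continuous (K:=R_AbsRing) (V:=R_NormedModule)).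
  unfold gc. auto_derive. pose proof (COS_bound t). pose proof (sq_pos c t Hc).
  unfold Rminus in *. repeat split; lra.
Qed.

Lemma Gc_deriv c t : 1 < c -> is_derive (Gc c) t (gc c t).
Proof.
  intros Hc. apply (is_derive_RInt (gc c) (Gc c) 0 t).
  - apply filter_forall. intros y. unfold Gc. apply (RInt_correct (V:=R_CompleteNormedModule)).
    apply ex_RInt_continuous. intros; apply gc_cont; auto.
  - apply gc_cont; auto.
Qed.

Lemma Gc0 c : Gc c 0 = 0.
Proof. unfold Gc. apply (RInt_point (V:=R_CompleteNormedModule)). Qed.

Lemma gc_nonneg c t : 1 < c -> -(PI/2) <= t <= PI/2 -> 0 <= gc c t.
Proof.
  intros Hc Ht. unfold gc. pose proof (sq_pos c t Hc). pose proof (cos_ge_0 t (proj1 Ht) (proj2 Ht)).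
  apply Rmult_le_pos; auto. left; apply Rinv_0_lt_compat; auto.
Qed.

Lemma gc_pos c t : 1 < c -> -(PI/2) < t < PI/2 -> 0 < gc c t.
Proof.
  intros Hc Ht. unfold gc. pose proof (sq_pos c t Hc). pose proof (cos_gt_0 t (proj1 Ht) (proj2 Ht)).
  apply Rmult_lt_0_compat; auto. apply Rinv_0_lt_compat; auto.
Qed.

Lemma Gc_incr c x y : 1 < c -> -(PI/2) <= x -> x < y -> y <= PI/2 -> Gc c x < Gc c y.
Proof.
  intros Hc H1 H2 H3. apply (mvt_lt (Gc c) (gc c)); auto.
  - intros; apply Gc_deriv; auto.
  - intros; apply gc_nonneg; auto; lra.
  - intros; apply gc_pos; auto; lra.
Qed.

Lemma Gc_lt_inv c x y : 1 < c -> -(PI/2) <= x <= PI/2 -> -(PI/2) <= y <= PI/2 ->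
  Gc c x < Gc c y -> x < y.
Proof.
  intros Hc Hx Hy H. destruct (Rlt_or_le x y) as [h|h]; auto.
  destruct (Req_dec x y) as [->|hn]; [lra|].
  assert (Gc c y < Gc c x) by (apply Gc_incr; auto; lra). lra.
Qed.

Lemma Gc_inj c x y : 1 < c -> -(PI/2) <= x <= PI/2 -> -(PI/2) <= y <= PI/2 ->
  Gc c x = Gc c y -> x = y.
Proof.
  intros Hc Hx Hy H. destruct (Rtotal_order x y) as [h|[h|h]]; auto.
  - assert (Gc c x < Gc c y) by (apply Gc_incr; auto; lra). lra.
  - assert (Gc c y < Gc c x) by (apply Gc_incr; auto; lra). lra.
Qed.

Lemma gc_diff_pos c1 c2 t : 1 < c1 < c2 -> -(PI/2) < t < PI/2 -> 0 < gc c1 t - gc c2 t.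
Proof.
  intros Hc Ht. unfold gc. pose proof (cos_gt_0 t (proj1 Ht) (proj2 Ht)).
  pose proof (sq_pos c1 t (proj1 Hc)). pose proof (sq_pos c2 t (ltac:(lra))).
  assert (sqrt (2 * (c1 - cos t)) < sqrt (2 * (c2 - cos t))).
  { apply sqrt_lt_1; pose proof (COS_bound t); lra. }
  assert (/ sqrt (2 * (c2 - cos t)) < / sqrt (2 * (c1 - cos t))).
  { apply Rinv_lt_contravar; auto. nra. }
  unfold Rdiv. nra.
Qed.

Lemma gc_diff_nonneg c1 c2 t : 1 < c1 < c2 -> -(PI/2) <= t <= PI/2 -> 0 <= gc c1 t - gc c2 t.
Proof.
  intros Hc Ht. unfold gc. pose proof (cos_ge_0 t (proj1 Ht) (proj2 Ht)).
  pose proof (sq_pos c1 t (proj1 Hc)). pose proof (sq_pos c2 t (ltac:(lra))).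
  assert (sqrt (2 * (c1 - cos t)) < sqrt (2 * (c2 - cos t))).
  { apply sqrt_lt_1; pose proof (COS_bound t); lra. }
  assert (/ sqrt (2 * (c2 - cos t)) < / sqrt (2 * (c1 - cos t))).
  { apply Rinv_lt_contravar; auto. nra. }
  unfold Rdiv. nra.
Qed.

Lemma D_incr c1 c2 x y : 1 < c1 < c2 -> -(PI/2) <= x -> x < y -> y <= PI/2 ->
  Gc c1 x - Gc c2 x < Gc c1 y - Gc c2 y.
Proof.
  intros Hc H1 H2 H3.
  apply (mvt_lt (fun t => Gc c1 t - Gc c2 t) (fun t => gc c1 t - gc c2 t)); auto.
  - intros; apply @is_derive_minus; apply Gc_deriv; lra.
  - intros; apply gc_diff_nonneg; auto; lra.
  - intros; apply gc_diff_pos; auto; lra.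
Qed.

Lemma cos_lt_abs p q : 0 <= p -> p < q -> q < PI/2 -> cos q < cos p.
Proof. intros. apply cos_decreasing_1; pose proof PI_RGT_0; lra. Qed.

Lemma cross c1 c2 p1 p2 : 1 < c1 < c2 -> -(PI/2) < p1 < PI/2 -> -(PI/2) < p2 < PI/2 ->
  Gc c1 p1 = Gc c2 p2 ->
  sqrt (2 * (c1 - cos p1)) < sqrt (2 * (c2 - cos p2)).
Proof.
  intros Hc H1 H2 E.
  assert (Hc1 : 1 < c1) by lra. assert (Hc2 : 1 < c2) by lra. pose proof PI_RGT_0 as HPI.
  assert (cos p2 <= cos p1).
  { destruct (Rtotal_order p2 0) as [h|[h|h]].
    - assert (D := D_incr c1 c2 p2 0 Hc ltac:(lra) h ltac:(pose proof PI_RGT_0; lra)).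
      rewrite !Gc0 in D.
      assert (p2 < p1) by (apply (Gc_lt_inv c1); try lra).
      assert (Gc c2 p2 < Gc c2 0) by (apply Gc_incr; lra). rewrite Gc0 in H0.
      assert (p1 < 0) by (apply (Gc_lt_inv c1); try lra; pose proof PI_RGT_0; rewrite Gc0; lra).
      rewrite <- (cos_neg p1), <- (cos_neg p2). left; apply cos_lt_abs; lra.
    - subst p2. rewrite Gc0 in E. rewrite <- (Gc0 c1) in E.
      apply (Gc_inj c1) in E; [ | lra | lra | lra ]. subst p1. lra.
    - assert (D := D_incr c1 c2 0 p2 Hc ltac:(pose proof PI_RGT_0; lra) h ltac:(lra)).
      rewrite !Gc0 in D.
      assert (p1 < p2) by (apply (Gc_lt_inv c1); try lra).
      assert (Gc c2 0 < Gc c2 p2) by (apply Gc_incr; pose proof PI_RGT_0; lra). rewrite Gc0 in H0.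
      assert (0 < p1) by (apply (Gc_lt_inv c1); try lra; pose proof PI_RGT_0; rewrite Gc0; lra).
      left; apply cos_lt_abs; lra. }
  apply sqrt_lt_1; pose proof (COS_bound p1); pose proof (COS_bound p2); lra.
Qed.

Lemma psi_bound U x : -(PI/2) < psi U x < PI/2.
Proof. unfold psi. pose proof (atan_bound (Derive U x)). lra. Qed.

Lemma sol_psi a b U x : sol a b U -> a < x < b ->
  is_derive (psi U) x (Derive (psi U) x) /\ cos (psi U x) * Derive (psi U) x = U x.
Proof.
  intros [Hab Hs] Hx. destruct (Hs x Hx) as [_ [[d Hd] [_ Hsin]]].
  assert (Hp : is_derive (psi U) x (scal d (/ (1 + (Derive U x)²)))).
  { unfold psi. apply (is_derive_comp atan (Derive U) x); auto. apply is_derive_atan. }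
  assert (E := is_derive_unique _ _ _ Hp). rewrite <- E in Hp.
  split; auto.
  assert (Hs2 : is_derive (fun y => sin (psi U y)) x (scal (Derive (psi U) x) (cos (psi U x)))).
  { apply (is_derive_comp sin (psi U) x); auto. apply is_derive_sin. }
  apply is_derive_unique in Hs2. apply is_derive_unique in Hsin.
  rewrite Hsin in Hs2. rewrite Hs2. unfold scal; simpl. unfold mult; simpl. ring.
Qed.

Lemma U_sq c a b U x : first_int c a b U -> a < x < b -> U x ^ 2 = 2 * (c - cos (psi U x)).
Proof. intros Hf Hx. specialize (Hf x Hx). lra. Qed.

Lemma U_sqrt c a b U x : first_int c a b U -> a < x < b -> 0 < U x ->
  U x = sqrt (2 * (c - cos (psi U x))).
Proof.
  intros Hf Hx Hp. rewrite <- (U_sq c a b U x Hf Hx). rewrite sqrt_pow2; lra.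
Qed.

Lemma U_ne0 c a b U x : first_int c a b U -> 1 < c -> a < x < b -> U x <> 0.
Proof.
  intros Hf Hc Hx E. pose proof (U_sq c a b U x Hf Hx). rewrite E in H.
  pose proof (COS_bound (psi U x)). lra.
Qed.

Lemma sol_cont a b U x : sol a b U -> a < x < b -> continuity_pt U x.
Proof.
  intros [_ Hs] Hx. destruct (Hs x Hx) as [[l Hl] _]. apply (is_derive_cont _ _ l Hl).
Qed.

Lemma sign_const c a b U p : sol a b U -> first_int c a b U -> 1 < c ->
  a < p < b -> 0 < U p -> forall x, a < x < b -> 0 < U x.
Proof.
  intros Hs Hf Hc Hp Up x Hx.
  destruct (Rlt_or_le 0 (U x)) as [h|h]; auto. exfalso.
  assert (Ux : U x < 0) by (pose proof (U_ne0 c a b U x Hf Hc Hx); lra).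
  destruct (Rtotal_order x p) as [h1|[h1|h1]].
  - destruct (IVT_interv U x p) as [z [Hz Ez]]; auto.
    + intros; apply (sol_cont a b); auto; lra.
    + apply (U_ne0 c a b U z Hf Hc); auto; lra.
  - subst; lra.
  - destruct (IVT_interv (fun y => - U y) p x) as [z [Hz Ez]]; auto.
    + intros. apply continuity_pt_opp. apply (sol_cont a b); auto; lra.
    + lra.
    + lra.
    + apply (U_ne0 c a b U z Hf Hc); auto; lra.
Qed.

Lemma pos_G c a b U : sol a b U -> first_int c a b U -> 1 < c ->
  (forall x, a < x < b -> 0 < U x) ->
  exists K, forall x, a < x < b -> Gc c (psi U x) = x + K.
Proof.
  intros Hs Hf Hc Hpos. pose proof (proj1 Hs) as Hab.
  exists (Gc c (psi U ((a+b)/2)) - (a+b)/2). intros x Hx.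
  assert (Hd : forall z, a < z < b -> is_derive (fun y => Gc c (psi U y) - y) z 0).
  { intros z Hz. destruct (sol_psi a b U z Hs Hz) as [Hp Ep].
    assert (H1 : is_derive (fun y => Gc c (psi U y)) z (scal (Derive (psi U) z) (gc c (psi U z)))).
    { apply (is_derive_comp (Gc c) (psi U) z); auto. apply Gc_deriv; auto. }
    assert (H2 := is_derive_minus _ _ z _ _ H1 (is_derive_id z)).
    unfold scal, minus, plus, opp, one in H2; simpl in H2. unfold mult in H2; simpl in H2.
    replace 0 with (Derive (psi U) z * gc c (psi U z) + - 1); auto.
    unfold gc. rewrite <- (U_sqrt c a b U z Hf Hz (Hpos z Hz)).
    pose proof (Hpos z Hz). field_simplify; [|lra]. rewrite Rmult_comm, Ep. field. lra. }
  pose proof (deriv0_const _ a b x ((a+b)/2) Hd Hx ltac:(lra)). simpl in H. lra.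
Qed.

Lemma Derive_opp_fun U : Derive (fun x => - U x) = fun x => - Derive U x.
Proof. apply functional_extensionality. intros; apply Derive_opp. Qed.

Lemma psi_opp U x : psi (fun y => - U y) x = - psi U x.
Proof. unfold psi. rewrite Derive_opp_fun. apply atan_opp. Qed.

Lemma sol_opp a b U : sol a b U -> sol a b (fun x => - U x).
Proof.
  intros [Hab Hs]. split; auto. intros x Hx. destruct (Hs x Hx) as [H1 [H2 [H3 H4]]].
  rewrite Derive_opp_fun.
  split; [auto_derive; auto|].
  split; [auto_derive; auto|].
  split.
  - rewrite (Derive_opp_fun (Derive U)). apply (continuous_opp (K:=R_AbsRing) (V:=R_NormedModule)) in H3. exact H3.
  - apply is_derive_ext with (f := fun y => - sin (psi U y)).
    + intros t. rewrite psi_opp. rewrite sin_neg. reflexivity.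
    + apply is_derive_opp in H4. exact H4.
Qed.

Lemma first_int_opp c a b U : first_int c a b U -> first_int c a b (fun x => - U x).
Proof.
  intros Hf x Hx. rewrite psi_opp, cos_neg. specialize (Hf x Hx). lra.
Qed.

Lemma interval_bound a b K A B : a < b -> (forall x, a < x < b -> A < x + K < B) -> b - a <= B - A.
Proof.
  intros Hab H. assert (HBA : A < B) by (specialize (H ((a+b)/2) ltac:(lra)); lra).
  destruct (Rle_or_lt (b - a) (B - A)) as [h|h]; auto. exfalso.
  set (e := (b - a - (B - A)) / 4).
  assert (H1 := H (a + e) ltac:(unfold e; lra)). assert (H2 := H (b - e) ltac:(unfold e; lra)).
  unfold e in *; lra.
Qed.

Lemma Gc_total_bound c : 1 < c -> Gc c (PI/2) - Gc c (-(PI/2)) < sqrt (2 / (c - 1)).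
Proof.
  intros Hc. pose proof PI_RGT_0 as HPI.
  set (k := sqrt (2 * (c - 1))).
  assert (Hk : 0 < k) by (apply sqrt_lt_R0; lra).
  assert (Hdf : forall t, is_derive (fun t => sin t / k - Gc c t) t (cos t / k - gc c t)).
  { intros t. apply @is_derive_minus; [|apply Gc_deriv; auto].
    auto_derive; [lra | field; lra]. }
  assert (Hle : forall t, -(PI/2) <= t <= PI/2 -> 0 <= cos t / k - gc c t).
  { intros t Ht. unfold gc. pose proof (cos_ge_0 t (proj1 Ht) (proj2 Ht)).
    pose proof (sq_pos c t Hc). pose proof (COS_bound t).
    assert (k <= sqrt (2 * (c - cos t))) by (apply sqrt_le_1; lra).
    assert (/ sqrt (2 * (c - cos t)) <= / k) by (apply Rinv_le_contravar; auto).
    unfold Rdiv. nra. }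
  assert (Hlt : forall t, -(PI/2) < t < PI/2 -> t <> 0 -> 0 < cos t / k - gc c t).
  { intros t Ht Hn. unfold gc. pose proof (cos_gt_0 t (proj1 Ht) (proj2 Ht)).
    pose proof (sq_pos c t Hc). pose proof (COS_bound t).
    assert (cos t < 1).
    { rewrite <- cos_0. destruct (Rlt_or_le 0 t).
      - apply cos_lt_abs; lra.
      - rewrite <- (cos_neg t). apply cos_lt_abs; lra. }
    assert (k < sqrt (2 * (c - cos t))) by (apply sqrt_lt_1; lra).
    assert (/ sqrt (2 * (c - cos t)) < / k) by (apply Rinv_lt_contravar; auto; nra).
    unfold Rdiv. nra. }
  assert (D1 := mvt_lt (fun t => sin t / k - Gc c t) (fun t => cos t / k - gc c t) (-(PI/2)) 0
     ltac:(lra) ltac:(intros; apply Hdf) ltac:(intros; apply Hle; lra) ltac:(intros; apply Hlt; lra)).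
  assert (D2 := mvt_lt (fun t => sin t / k - Gc c t) (fun t => cos t / k - gc c t) 0 (PI/2)
     ltac:(lra) ltac:(intros; apply Hdf) ltac:(intros; apply Hle; lra) ltac:(intros; apply Hlt; lra)).
  simpl in D1, D2. rewrite sin_neg, sin_PI2 in D1. rewrite sin_PI2 in D2.
  assert (E : sqrt (2 / (c - 1)) = 2 / k).
  { apply sqrt_lem_1.
    - apply Rlt_le, Rdiv_lt_0_compat; lra.
    - apply Rlt_le, Rdiv_lt_0_compat; lra.
    - unfold k. field_simplify; [|lra | apply Rgt_not_eq, sqrt_lt_R0; lra].
      rewrite <- Rsqr_pow2, Rsqr_sqrt by lra. field. lra. }
  rewrite E. unfold Rdiv in *. lra.
Qed.

Lemma part_i_pos a b c U : sol a b U -> first_int c a b U -> 1 < c ->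
  (forall x, a < x < b -> 0 < U x) -> b - a < sqrt (2 / (c - 1)).
Proof.
  intros Hs Hf Hc Hp. destruct (pos_G c a b U Hs Hf Hc Hp) as [K HK].
  apply Rle_lt_trans with (Gc c (PI/2) - Gc c (-(PI/2))); [|apply Gc_total_bound; auto].
  apply (interval_bound a b K); [apply Hs|]. intros x Hx. rewrite <- HK by auto.
  pose proof (psi_bound U x). split; apply Gc_incr; lra.
Qed.

Lemma part_i a b c U : sol a b U -> first_int c a b U -> 1 < c -> b - a < sqrt (2 / (c - 1)).
Proof.
  intros Hs Hf Hc. pose proof (proj1 Hs) as Hab. set (m := (a+b)/2).
  assert (Hm : a < m < b) by (unfold m; lra).
  destruct (Rlt_or_le 0 (U m)) as [h|h].
  - apply (part_i_pos a b c U Hs Hf Hc). apply (sign_const c a b U m); auto.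
  - assert (U m <> 0) by (apply (U_ne0 c a b U m Hf Hc Hm)).
    apply (part_i_pos a b c (fun x => - U x)); [apply sol_opp; auto|apply first_int_opp; auto|auto|].
    apply (sign_const c a b (fun x => - U x) m); [apply sol_opp; auto|apply first_int_opp; auto|auto|auto|lra].
Qed.

Definition sol_at (U : R -> R) (x : R) : Prop :=
  ex_derive U x /\ ex_derive (Derive U) x /\
  continuous (Derive (Derive U)) x /\
  is_derive (fun y => sin (psi U y)) x (U x).

Lemma sol_at_interval p q U V x : p < x < q -> (forall y, p < y < q -> V y = U y) ->
  sol_at U x -> sol_at V x.
Proof.
  intros Hx HE [H1 [H2 [H3 H4]]].
  assert (L : forall z, p < z < q -> locally z (fun y => U y = V y)).
  { intros z Hz. apply (filter_imp (fun y => p < y < q)); [intros y Hy; symmetry; auto|].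
    apply loc_interval; auto. }
  assert (DE : forall y, p < y < q -> Derive U y = Derive V y).
  { intros y Hy. apply Derive_ext_loc. apply L; auto. }
  assert (L2 : forall z, p < z < q -> locally z (fun y => Derive U y = Derive V y)).
  { intros z Hz. apply (filter_imp (fun y => p < y < q)); [intros y Hy; auto|].
    apply loc_interval; auto. }
  assert (DDE : forall y, p < y < q -> Derive (Derive U) y = Derive (Derive V) y).
  { intros y Hy. apply Derive_ext_loc. apply L2; auto. }
  assert (PE : forall y, p < y < q -> sin (psi U y) = sin (psi V y)).
  { intros y Hy. unfold psi. rewrite DE; auto. }
  split; [apply (ex_derive_ext_loc U V x); auto|].
  split; [apply (ex_derive_ext_loc (Derive U) (Derive V) x); auto|].
  split.
  - apply (continuous_ext_loc _ (Derive (Derive U))); auto.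
    apply (filter_imp (fun y => p < y < q)); [intros y Hy; auto|]. apply loc_interval; auto.
  - rewrite HE; auto. apply (is_derive_ext_loc (fun y => sin (psi U y))); auto.
    apply (filter_imp (fun y => p < y < q)); [intros y Hy; auto|]. apply loc_interval; auto.
Qed.

Lemma normalized_facts a b U : normalized_curve a b U ->
  exists c, 1 < c /\ first_int c a b U /\ (forall x, a < x < b -> 0 < U x) /\ a < 0 < b /\
    (forall x, a < x < b -> Gc c (psi U x) = x).
Proof.
  intros [[Hs Hmax] [[c [Hc Hf]] [Hpos [H0 Hmin]]]].
  exists c. do 4 (split; auto).
  destruct (pos_G c a b U Hs Hf Hc Hpos) as [K HK].
  assert (Hp0 : psi U 0 = 0).
  { destruct Hs as [_ Hs]. destruct (Hs 0 H0) as [[l Hl] _].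
    pose proof (is_derive_unique _ _ _ Hl) as El.
    apply is_derive_Reals in Hl.
    assert (Hd := deriv_minimum U a b 0 (exist _ l Hl) (proj1 H0) (proj2 H0)
                   (fun x h1 h2 => Hmin x (conj h1 h2))).
    rewrite (derive_pt_eq_0 U 0 l (exist _ l Hl) Hl) in Hd.
    unfold psi. simpl in El. rewrite El, Hd. apply atan_0. }
  assert (K = 0) by (specialize (HK 0 H0); rewrite Hp0, Gc0 in HK; lra).
  subst K. intros x Hx. rewrite HK; auto; ring.
Qed.

Lemma part_iii a1 b1 a2 b2 x U1 U2 :
  normalized_curve a1 b1 U1 -> normalized_curve a2 b2 U2 ->
  a1 < x < b1 -> a2 < x < b2 -> U1 x = U2 x ->
  a1 = a2 /\ b1 = b2 /\ (forall y, a1 < y < b1 -> U1 y = U2 y).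
Proof.
  intros N1 N2 Hx1 Hx2 Ex.
  destruct (normalized_facts a1 b1 U1 N1) as [c1 [Hc1 [Hf1 [Hp1 [H01 HG1]]]]].
  destruct (normalized_facts a2 b2 U2 N2) as [c2 [Hc2 [Hf2 [Hp2 [H02 HG2]]]]].
  assert (Ec : c1 = c2).
  { destruct (Rtotal_order c1 c2) as [h|[h|h]]; auto; exfalso.
    - assert (C := cross c1 c2 (psi U1 x) (psi U2 x) ltac:(lra) (psi_bound U1 x) (psi_bound U2 x)
                     ltac:(rewrite HG1, HG2; auto)).
      rewrite <- (U_sqrt c1 a1 b1 U1 x), <- (U_sqrt c2 a2 b2 U2 x) in C; auto. lra.
    - assert (C := cross c2 c1 (psi U2 x) (psi U1 x) ltac:(lra) (psi_bound U2 x) (psi_bound U1 x)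
                     ltac:(rewrite HG1, HG2; auto)).
      rewrite <- (U_sqrt c1 a1 b1 U1 x), <- (U_sqrt c2 a2 b2 U2 x) in C; auto. lra. }
  subst c2.
  assert (Agr : forall y, a1 < y < b1 -> a2 < y < b2 -> U1 y = U2 y).
  { intros y Hy1 Hy2.
    assert (psi U1 y = psi U2 y).
    { apply (Gc_inj c1); auto; try (pose proof (psi_bound U1 y); lra);
        try (pose proof (psi_bound U2 y); lra). rewrite HG1, HG2; auto. }
    rewrite (U_sqrt c1 a1 b1 U1 y), (U_sqrt c1 a2 b2 U2 y); auto. rewrite H; auto. }
  set (V := fun y => if Rlt_dec a1 y then if Rlt_dec y b1 then U1 y else U2 y else U2 y).
  assert (V1 : forall y, a1 < y < b1 -> V y = U1 y).
  { intros y Hy. unfold V. destruct (Rlt_dec a1 y); [|lra]. destruct (Rlt_dec y b1); [|lra]. auto. }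
  assert (V2 : forall y, a2 < y < b2 -> V y = U2 y).
  { intros y Hy. unfold V. destruct (Rlt_dec a1 y); auto. destruct (Rlt_dec y b1); auto. }
  assert (Hcov : forall y, Rmin a1 a2 < y < Rmax b1 b2 -> (a1 < y < b1) \/ (a2 < y < b2)).
  { intros y Hy. unfold Rmin, Rmax in Hy.
    destruct (Rle_dec a1 a2); destruct (Rle_dec b1 b2); lra. }
  assert (HsV : sol (Rmin a1 a2) (Rmax b1 b2) V).
  { split.
    - apply Rlt_le_trans with 0; [apply Rle_lt_trans with a1; [apply Rmin_l|lra]|].
      apply Rle_trans with b1; [lra|apply Rmax_l].
    - intros y Hy. destruct (Hcov y Hy) as [h|h].
      + apply (sol_at_interval a1 b1 U1); auto. apply (proj2 (proj1 (proj1 N1))); auto.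
      + apply (sol_at_interval a2 b2 U2); auto. apply (proj2 (proj1 (proj1 N2))); auto. }
  destruct N1 as [[_ M1] _]. destruct N2 as [[_ M2] _].
  destruct (M1 _ _ V HsV) as [E1 E1'].
  { split; [apply Rmin_l|]. split; [apply Rmax_l|]. auto. }
  destruct (M2 _ _ V HsV) as [E2 E2'].
  { split; [apply Rmin_r|]. split; [apply Rmax_r|]. auto. }
  assert (a1 = a2) by congruence. assert (b1 = b2) by congruence. subst a2 b2.
  split; [reflexivity|split; [reflexivity|]]. intros y Hy. apply Agr; auto.
Qed.

Definition Hc (c s : R) : R :=
  epsilon (inhabits 0) (fun t => -(PI/2) <= t <= PI/2 /\ Gc c t = s).

Lemma Gc_cont_pt c t : 1 < c -> continuity_pt (Gc c) t.
Proof. intros; apply (is_derive_cont _ _ (gc c t)); apply Gc_deriv; auto. Qed.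

Lemma Hc_spec c s : 1 < c -> Gc c (-(PI/2)) <= s <= Gc c (PI/2) ->
  -(PI/2) <= Hc c s <= PI/2 /\ Gc c (Hc c s) = s.
Proof.
  intros Hc1 Hs. pose proof PI_RGT_0. unfold Hc. apply epsilon_spec.
  destruct (Req_dec s (Gc c (-(PI/2)))) as [E|N1].
  { exists (-(PI/2)). split; [lra|auto]. }
  destruct (Req_dec s (Gc c (PI/2))) as [E|N2].
  { exists (PI/2). split; [lra|auto]. }
  destruct (IVT_interv (fun t => Gc c t - s) (-(PI/2)) (PI/2)) as [z [Hz Ez]].
  - intros. apply continuity_pt_minus; [apply Gc_cont_pt; auto| apply continuity_pt_const; intros ??; auto].
  - lra.
  - lra.
  - lra.
  - exists z. split; auto. lra.
Qed.

Lemma Gc_le c x y : 1 < c -> -(PI/2) <= x -> x <= y -> y <= PI/2 -> Gc c x <= Gc c y.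
Proof.
  intros. destruct (Req_dec x y) as [->|?]; [lra|]. left; apply Gc_incr; auto; lra.
Qed.

Lemma Hc_G c t : 1 < c -> -(PI/2) <= t <= PI/2 -> Hc c (Gc c t) = t.
Proof.
  intros Hc1 Ht. assert (Gc c (-(PI/2)) <= Gc c t <= Gc c (PI/2)).
  { pose proof PI_RGT_0. split; apply Gc_le; auto; lra. }
  destruct (Hc_spec c (Gc c t) Hc1 H) as [H1 H2]. apply (Gc_inj c); auto.
Qed.

Lemma Hc_open c s : 1 < c -> Gc c (-(PI/2)) < s < Gc c (PI/2) -> -(PI/2) < Hc c s < PI/2.
Proof.
  intros Hc1 Hs. destruct (Hc_spec c s Hc1 ltac:(lra)) as [H1 H2].
  split.
  - destruct (Req_dec (Hc c s) (-(PI/2))) as [E|N]; [|lra]. rewrite E in H2. lra.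
  - destruct (Req_dec (Hc c s) (PI/2)) as [E|N]; [|lra]. rewrite E in H2. lra.
Qed.

Lemma Hc_cont c s : 1 < c -> Gc c (-(PI/2)) < s < Gc c (PI/2) -> continuity_pt (Hc c) s.
Proof.
  intros Hc1 Hs. pose proof PI_RGT_0.
  apply (continuity_pt_recip_interv (Gc c) (Hc c) (-(PI/2)) (PI/2) ltac:(lra)).
  - intros; apply Gc_incr; auto.
  - intros. unfold comp, id. apply Hc_spec; auto.
  - intros. apply Hc_spec; auto.
  - intros; apply Gc_cont_pt; auto.
  - auto.
Qed.

Definition hder (c t : R) : R := sqrt (2 * (c - cos t)) / cos t.

Lemma Hc_deriv c s : 1 < c -> Gc c (-(PI/2)) < s < Gc c (PI/2) ->
  is_derive (Hc c) s (hder c (Hc c s)).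
Proof.
  intros Hc1 Hs. pose proof PI_RGT_0.
  set (A := Gc c (-(PI/2))). set (B := Gc c (PI/2)).
  set (Gder := fun a => exist (fun l => derivable_pt_lim (Gc c) a l) (gc c a)
                  (proj1 (is_derive_Reals _ _ _) (Gc_deriv c a Hc1))).
  assert (HA : Hc c A = -(PI/2)) by (apply Hc_G; auto; lra).
  assert (HB : Hc c B = PI/2) by (apply Hc_G; auto; lra).
  pose proof (Hc_open c s Hc1 Hs) as Ho.
  assert (Pinc : Hc c A <= Hc c s <= Hc c B) by (rewrite HA, HB; lra).
  assert (Hcomp : forall x, A <= x <= B -> comp (Gc c) (Hc c) x = id x).
  { intros x Hx. unfold comp, id. apply Hc_spec; auto. }
  assert (Egd : derive_pt (Gc c) (Hc c s) (Gder (Hc c s)) = gc c (Hc c s)).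
  { apply derive_pt_eq_0. apply is_derive_Reals, Gc_deriv; auto. }
  assert (Hne : derive_pt (Gc c) (Hc c s) ((fun a (_ : Hc c A <= a <= Hc c B) => Gder a) (Hc c s) Pinc) <> 0).
  { change (derive_pt (Gc c) (Hc c s) (Gder (Hc c s)) <> 0). rewrite Egd. apply Rgt_not_eq, gc_pos; auto. }
  pose proof (derivable_pt_lim_recip_interv (Gc c) (Hc c) A B s
     (fun a _ => Gder a) (Hc_cont c s Hc1 Hs) ltac:(unfold A, B in *; lra) Hs Pinc Hcomp Hne) as D.
  change (derivable_pt_lim (Hc c) s (1 / derive_pt (Gc c) (Hc c s) (Gder (Hc c s)))) in D. rewrite Egd in D. apply is_derive_Reals.
  replace (hder c (Hc c s)) with (1 / gc c (Hc c s)); auto.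
  unfold hder, gc. pose proof (sq_pos c (Hc c s) Hc1). pose proof (cos_gt_0 _ (proj1 Ho) (proj2 Ho)).
  field. split; lra.
Qed.

Definition Vf (c K y : R) : R := sqrt (2 * (c - cos (Hc c (y + K)))).
Definition Qf (c t : R) : R := hder c t / (cos t ^ 2).

Lemma h_deriv c K y : 1 < c -> Gc c (-(PI/2)) < y + K < Gc c (PI/2) ->
  is_derive (fun z => Hc c (z + K)) y (hder c (Hc c (y + K))).
Proof.
  intros Hc1 Hy.
  assert (H1 : is_derive (fun z : R => z + K) y 1) by (auto_derive; auto; ring).
  pose proof (is_derive_comp (Hc c) (fun z => z + K) y _ _ (Hc_deriv c (y + K) Hc1 Hy) H1) as D.
  unfold scal in D; simpl in D; unfold mult in D; simpl in D. rewrite Rmult_1_l in D. exact D.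
Qed.

Lemma f0_deriv c t : 1 < c -> is_derive (fun t => sqrt (2 * (c - cos t))) t (sin t / sqrt (2 * (c - cos t))).
Proof.
  intros Hc1. pose proof (COS_bound t). pose proof (sq_pos c t Hc1).
  auto_derive.
  - unfold Rminus in *. lra.
  - unfold Rminus in *. field. lra.
Qed.

Lemma tan_deriv t : cos t <> 0 -> is_derive tan t (/ (cos t ^ 2)).
Proof.
  intros Hc. unfold tan. auto_derive; auto.
  pose proof (sin2_cos2 t). unfold Rsqr in H. field_simplify; auto.
  replace (cos t ^ 2 + sin t ^ 2) with 1 by (simpl; lra). reflexivity.
Qed.

Lemma Qf_cont c t : 1 < c -> -(PI/2) < t < PI/2 -> continuous (Qf c) t.
Proof.
  intros Hc1 Ht. apply (ex_derive_continuous (K:=R_AbsRing) (V:=R_NormedModule)).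
  pose proof (cos_gt_0 _ (proj1 Ht) (proj2 Ht)). pose proof (COS_bound t). pose proof (sq_pos c t Hc1).
  unfold Qf, hder. auto_derive. unfold Rminus in *. repeat split; try lra.
  all: apply Rgt_not_eq; rewrite Rmult_1_r; apply Rmult_lt_0_compat; lra.
Qed.

Lemma V_sol_at c K y : 1 < c -> Gc c (-(PI/2)) - K < y < Gc c (PI/2) - K -> sol_at (Vf c K) y.
Proof.
  intros Hc1 Hy. set (A := Gc c (-(PI/2))). set (B := Gc c (PI/2)).
  assert (Hdom : forall z, A - K < z < B - K -> Gc c (-(PI/2)) < z + K < Gc c (PI/2)).
  { intros z Hz. unfold A, B in *. lra. }
  assert (Hopen : forall z, A - K < z < B - K -> -(PI/2) < Hc c (z + K) < PI/2).
  { intros z Hz. apply Hc_open; auto. }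
  assert (Hcos : forall z, A - K < z < B - K -> 0 < cos (Hc c (z + K))).
  { intros z Hz. destruct (Hopen z Hz). apply cos_gt_0; auto. }
  assert (DV : forall z, A - K < z < B - K -> is_derive (Vf c K) z (tan (Hc c (z + K)))).
  { intros z Hz. unfold Vf.
    pose proof (is_derive_comp (fun t => sqrt (2 * (c - cos t))) (fun z => Hc c (z + K)) z _ _
                 (f0_deriv c (Hc c (z + K)) Hc1) (h_deriv c K z Hc1 (Hdom z Hz))) as D.
    unfold scal in D; simpl in D; unfold mult in D; simpl in D.
    replace (tan (Hc c (z + K))) with
      (hder c (Hc c (z + K)) * (sin (Hc c (z + K)) / sqrt (2 * (c - cos (Hc c (z + K)))))); auto.
    unfold hder, tan. pose proof (Hcos z Hz). pose proof (sq_pos c (Hc c (z + K)) Hc1). field. lra. }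
  assert (EDV : forall z, A - K < z < B - K -> Derive (Vf c K) z = tan (Hc c (z + K))).
  { intros; apply is_derive_unique; auto. }
  assert (DT : forall z, A - K < z < B - K ->
            is_derive (fun w => tan (Hc c (w + K))) z (Qf c (Hc c (z + K)))).
  { intros z Hz. pose proof (Hcos z Hz).
    pose proof (is_derive_comp tan (fun w => Hc c (w + K)) z _ _
                  (tan_deriv (Hc c (z + K)) ltac:(lra)) (h_deriv c K z Hc1 (Hdom z Hz))) as D.
    unfold scal in D; simpl in D; unfold mult in D; simpl in D. unfold Qf. unfold Rdiv. exact D. }
  assert (LV : forall z, A - K < z < B - K -> locally z (fun w => tan (Hc c (w + K)) = Derive (Vf c K) w)).
  { intros z Hz. apply (filter_imp (fun w => A - K < w < B - K)); [intros w Hw; symmetry; auto|].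
    apply loc_interval; auto. }
  assert (EDDV : forall z, A - K < z < B - K -> Derive (Derive (Vf c K)) z = Qf c (Hc c (z + K))).
  { intros z Hz. rewrite <- (Derive_ext_loc _ _ z (LV z Hz)). apply is_derive_unique; auto. }
  assert (EP : forall z, A - K < z < B - K -> psi (Vf c K) z = Hc c (z + K)).
  { intros z Hz. unfold psi. rewrite EDV; auto. apply atan_tan. apply Hopen; auto. }
  split; [exists (tan (Hc c (y + K))); auto|].
  split; [apply (ex_derive_ext_loc _ _ y (LV y Hy)); exists (Qf c (Hc c (y + K))); auto|].
  split.
  - apply (continuous_ext_loc _ (fun z => Qf c (Hc c (z + K)))).
    + apply (filter_imp (fun w => A - K < w < B - K)); [intros w Hw; symmetry; auto|].
      apply loc_interval; auto.
    + apply (continuous_comp (fun z => Hc c (z + K)) (Qf c)).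
      * apply (ex_derive_continuous (K:=R_AbsRing) (V:=R_NormedModule)).
        exists (hder c (Hc c (y + K))). apply h_deriv; auto.
      * apply Qf_cont; auto.
  - apply (is_derive_ext_loc (fun z => sin (Hc c (z + K)))).
    + apply (filter_imp (fun w => A - K < w < B - K)); [intros w Hw; rewrite EP; auto|].
      apply loc_interval; auto.
    + pose proof (is_derive_comp sin (fun w => Hc c (w + K)) y _ _
                  (is_derive_sin (Hc c (y + K))) (h_deriv c K y Hc1 (Hdom y Hy))) as D.
      unfold scal in D; simpl in D; unfold mult in D; simpl in D.
      replace (Vf c K y) with (hder c (Hc c (y + K)) * cos (Hc c (y + K))); auto.
      unfold hder, Vf. pose proof (Hcos y Hy). field. lra.
Qed.

Lemma Hc0 c : 1 < c -> Hc c 0 = 0.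
Proof.
  intros Hc1. pose proof PI_RGT_0. pose proof (Hc_G c 0 Hc1 ltac:(lra)) as E. rewrite Gc0 in E. exact E.
Qed.

Lemma left_end a b K A : a < b -> (forall x, a < x < b -> A < x + K) -> A - K <= a.
Proof.
  intros Hab H. destruct (Rle_or_lt (A - K) a) as [h|h]; auto. exfalso.
  assert (He : 0 < Rmin (b - a) (A - K - a)) by (apply Rmin_pos; lra).
  pose proof (Rmin_l (b - a) (A - K - a)). pose proof (Rmin_r (b - a) (A - K - a)).
  specialize (H (a + Rmin (b - a) (A - K - a) / 2) ltac:(lra)). lra.
Qed.

Lemma right_end a b K B : a < b -> (forall x, a < x < b -> x + K < B) -> b <= B - K.
Proof.
  intros Hab H. destruct (Rle_or_lt b (B - K)) as [h|h]; auto. exfalso.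
  assert (He : 0 < Rmin (b - a) (b - (B - K))) by (apply Rmin_pos; lra).
  pose proof (Rmin_l (b - a) (b - (B - K))). pose proof (Rmin_r (b - a) (b - (B - K))).
  specialize (H (b - Rmin (b - a) (b - (B - K)) / 2) ltac:(lra)). lra.
Qed.

Lemma part_ii a b c U : sol a b U -> first_int c a b U -> 1 < c ->
  (exists x, a < x < b /\ 0 < U x) ->
  exists (a' b' : R) (V : R -> R),
    sol a' b' V /\ extends a' b' V a b U /\
    exists x0, a' < x0 < b' /\ 0 < V x0 /\
      (forall x, a' < x < b' -> V x0 <= V x) /\
      (forall x1, a' < x1 < b' ->
         (forall x, a' < x < b' -> V x1 <= V x) -> x1 = x0).
Proof.
  intros Hs Hf Hc1 [p [Hp Up]]. pose proof PI_RGT_0 as HPI.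
  assert (Hpos := sign_const c a b U p Hs Hf Hc1 Hp Up).
  destruct (pos_G c a b U Hs Hf Hc1 Hpos) as [K HK].
  set (A := Gc c (-(PI/2))). set (B := Gc c (PI/2)).
  assert (HA0 : A < 0) by (unfold A; rewrite <- (Gc0 c); apply Gc_incr; lra).
  assert (HB0 : 0 < B) by (unfold B; rewrite <- (Gc0 c); apply Gc_incr; lra).
  assert (Hin : forall x, a < x < b -> A < x + K < B).
  { intros x Hx. rewrite <- HK by auto. pose proof (psi_bound U x).
    unfold A, B; split; apply Gc_incr; lra. }
  exists (A - K), (B - K), (Vf c K).
  assert (Hab := proj1 Hs).
  split; [split; [lra|] ; intros y Hy; apply V_sol_at; auto|].
  split.
  { split; [apply (left_end a b K A); auto; apply Hin|].
    split; [apply (right_end a b K B); auto; apply Hin|].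
    intros x Hx. unfold Vf. rewrite <- HK by auto. rewrite Hc_G; auto.
    - symmetry; apply (U_sqrt c a b U x); auto.
    - pose proof (psi_bound U x); lra. }
  assert (Vmin : forall x, Vf c K (-K) <= Vf c K x).
  { intros x. unfold Vf. replace (- K + K) with 0 by ring. rewrite (Hc0 c Hc1). rewrite cos_0. apply sqrt_le_1_alt.
    pose proof (COS_bound (Hc c (x + K))). lra. }
  exists (-K). split; [lra|]. split.
  { unfold Vf. replace (- K + K) with 0 by ring. rewrite (Hc0 c Hc1). rewrite cos_0. apply sqrt_lt_R0. lra. }
  split; [intros; apply Vmin|].
  intros x1 Hx1 Hm.
  assert (Le : Vf c K x1 <= Vf c K (-K)) by (apply Hm; lra).
  assert (Ho : -(PI/2) < Hc c (x1 + K) < PI/2) by (apply Hc_open; auto; unfold A, B in *; lra).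
  assert (Hh : Hc c (x1 + K) = 0).
  { destruct (Req_dec (Hc c (x1 + K)) 0) as [E|N]; auto. exfalso.
    assert (cos (Hc c (x1 + K)) < 1).
    { rewrite <- cos_0. destruct (Rlt_or_le 0 (Hc c (x1 + K))).
      - apply cos_lt_abs; lra.
      - rewrite <- (cos_neg (Hc c (x1 + K))). apply cos_lt_abs; lra. }
    revert Le. unfold Vf. replace (- K + K) with 0 by ring. rewrite (Hc0 c Hc1). rewrite cos_0. intros Le.
    assert (sqrt (2 * (c - 1)) < sqrt (2 * (c - cos (Hc c (x1 + K))))) by (apply sqrt_lt_1; lra).
    lra. }
  destruct (Hc_spec c (x1 + K) Hc1 ltac:(unfold A, B in *; lra)) as [_ E].
  rewrite Hh, Gc0 in E. lra.
Qed.

Theorem theorem1 :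
  (* (i) length bound *)
  (forall (a b c : R) (U : R -> R),
     sol a b U -> first_int c a b U -> 1 < c ->
     b - a < sqrt (2 / (c - 1))) /\
  (* (ii) extension across a unique positive minimum point *)
  (forall (a b c : R) (U : R -> R),
     sol a b U -> first_int c a b U -> 1 < c ->
     (exists x, a < x < b /\ 0 < U x) ->
     exists (a' b' : R) (V : R -> R),
       sol a' b' V /\ extends a' b' V a b U /\
       exists x0, a' < x0 < b' /\ 0 < V x0 /\
         (forall x, a' < x < b' -> V x0 <= V x) /\
         (forall x1, a' < x1 < b' ->
            (forall x, a' < x < b' -> V x1 <= V x) -> x1 = x0)) /\
  (* (iii) the normalized maximal curves simply cover their union D+ *)
  (forall (a1 b1 a2 b2 x : R) (U1 U2 : R -> R),
     normalized_curve a1 b1 U1 -> normalized_curve a2 b2 U2 ->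
     a1 < x < b1 -> a2 < x < b2 -> U1 x = U2 x ->
     a1 = a2 /\ b1 = b2 /\ (forall y, a1 < y < b1 -> U1 y = U2 y)).
Proof.
  split; [exact part_i|]. split; [exact part_ii|]. exact part_iii.
Qed.
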